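(* There exists a real Banach space $Y$ such that for every $\varepsilon>0$ there exists an $\varepsilon$-convex set $A$ contained in the closed unit ball of $Y$ with $\mathcal{H}(A,\operatorname{Co}(A))=2$.
   Context: For $\varepsilon>0$, a set $A$ is $\varepsilon$-convex if $d(ta+(1-t)b,A)\le\varepsilon$ for all $a,b\in A$ and $t\in[0,1]$, where $d(x,A)=\inf_{a\in A}\|x-a\|$. $\mathcal{H}$ is the Hausdorff distance and $\operatorname{Co}$ the convex hull. *)

(* Defs.v *)
From HB Require Import structures.
From mathcomp Require Import all_boot all_order all_algebra.
From mathcomp Require Import all_classical all_reals all_analysis.
From mathcomp Require Import Rstruct Rstruct_topology.
Set Implicit Arguments. Unset Strict Implicit. Unset Printing Implicit Defensive.
Import Order.TTheory GRing.Theory Num.Theory.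
Import numFieldNormedType.Exports.
Local Open Scope classical_set_scope.
Local Open Scope ring_scope.

Notation RR := Rdefinitions.R.

Definition setdist (Y : normedModType RR) (x : Y) (A : set Y) : \bar RR :=
  ereal_inf [set (`|x - a|)%:E | a in A].

Definition eps_convex (Y : normedModType RR) (eps : RR) (A : set Y) : Prop :=
  forall a b, A a -> A b -> forall t : RR, 0 <= t <= 1 ->
    (setdist (t *: a + (1 - t) *: b)%R A <= eps%:E)%E.

Definition convex_hull (Y : normedModType RR) (A : set Y) : set Y :=
  [set x | exists (n : nat) (w : 'I_n -> RR) (p : 'I_n -> Y),
      (forall i, 0 <= w i) /\ \sum_(i < n) w i = 1 /\
      (forall i, A (p i)) /\ x = \sum_(i < n) w i *: p i].

Definition hausdorff (Y : normedModType RR) (A B : set Y) : \bar RR :=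
  Order.max (ereal_sup [set setdist a B | a in A])
            (ereal_sup [set setdist b A | b in B]).

(* Main.v *)
Require Import Defs.
From HB Require Import structures.
From mathcomp Require Import all_boot all_order all_algebra.
From mathcomp Require Import all_classical all_reals all_analysis.
From mathcomp Require Import Rstruct Rstruct_topology.
From mathcomp Require Import ring lra.
Import Order.TTheory GRing.Theory Num.Theory.
Import numFieldNormedType.Exports.
Local Open Scope classical_set_scope.
Local Open Scope ring_scope.

Definition Idx := (nat * (nat -> bool))%type.
Definition idx0 : Idx := (0%N, fun _ => false).

Definition bndd (f : Idx -> RR) := exists M : RR, forall i, `|f i| <= M.

Record linf := Linf { lf :> Idx -> RR; lfP : bndd lf }.

Lemma linf_ext (x y : linf) : (forall i, x i = y i) -> x = y.
Proof.
case: x => f fP; case: y => g gP /= H.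
have efg : f = g by apply: funext.
subst g; congr Linf; exact: Prop_irrelevance.
Qed.

HB.instance Definition _ := gen_eqMixin linf.
HB.instance Definition _ := gen_choiceMixin linf.

Lemma bndd0 : bndd (fun _ => 0).
Proof. by exists 0 => i; rewrite normr0. Qed.
Lemma bnddD f g : bndd f -> bndd g -> bndd (fun i => f i + g i).
Proof.
move=> [M fM] [N gN]; exists (M + N) => i.
by rewrite (le_trans (ler_normD _ _))// lerD.
Qed.
Lemma bnddN f : bndd f -> bndd (fun i => - f i).
Proof. by move=> [M fM]; exists M => i; rewrite normrN. Qed.
Lemma bnddZ (l : RR) f : bndd f -> bndd (fun i => l * f i).
Proof.
move=> [M fM]; exists (`|l| * M) => i.
by rewrite normrM ler_wpM2l.
Qed.

Definition l0 := @Linf _ bndd0.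
Definition ladd (x y : linf) := @Linf _ (bnddD _ _ (lfP x) (lfP y)).
Definition lopp (x : linf) := @Linf _ (bnddN _ (lfP x)).
Definition lscale (l : RR) (x : linf) := @Linf _ (bnddZ l _ (lfP x)).

Lemma laddA : associative ladd.
Proof. by move=> x y z; apply: linf_ext => i /=; rewrite addrA. Qed.
Lemma laddC : commutative ladd.
Proof. by move=> x y; apply: linf_ext => i /=; rewrite addrC. Qed.
Lemma ladd0 : left_id l0 ladd.
Proof. by move=> x; apply: linf_ext => i /=; rewrite add0r. Qed.
Lemma laddN : left_inverse l0 lopp ladd.
Proof. by move=> x; apply: linf_ext => i /=; rewrite addNr. Qed.

HB.instance Definition _ := GRing.isZmodule.Build linf laddA laddC ladd0 laddN.

Lemma lscaleA a b v : lscale a (lscale b v) = lscale (a * b) v.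
Proof. by apply: linf_ext => i /=; rewrite mulrA. Qed.
Lemma lscale1 : left_id 1 lscale.
Proof. by move=> v; apply: linf_ext => i /=; rewrite mul1r. Qed.
Lemma lscaleDr : right_distributive lscale +%R.
Proof. by move=> a u v; apply: linf_ext => i /=; rewrite mulrDr. Qed.
Lemma lscaleDl v : {morph lscale^~ v : a b / a + b}.
Proof. by move=> a b; apply: linf_ext => i /=; rewrite mulrDl. Qed.

HB.instance Definition _ := GRing.Zmodule_isLmodule.Build RR linf lscaleA lscale1 lscaleDr lscaleDl.

Lemma linfE_add (x y : linf) i : (x + y) i = x i + y i. Proof. by []. Qed.
Lemma linfE_opp (x : linf) i : (- x) i = - x i. Proof. by []. Qed.
Lemma linfE_scale l (x : linf) i : (l *: x) i = l * x i. Proof. by []. Qed.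
Lemma linfE_zero i : (0 : linf) i = 0. Proof. by []. Qed.

Definition lnorm (x : linf) : RR := sup [set `|x i| | i in [set: Idx]].

Lemma lnorm_has_sup (x : linf) : has_sup [set `|x i| | i in [set: Idx]].
Proof.
split; first by exists `|x idx0|, idx0.
case: (lfP x) => M HM; exists M => _ [i _ <-]; exact: HM.
Qed.

Lemma lnorm_ge (x : linf) i : `|x i| <= lnorm x.
Proof. apply: sup_ubound; [exact: (lnorm_has_sup x).2|by exists i]. Qed.

Lemma lnorm_le (x : linf) M : (forall i, `|x i| <= M) -> lnorm x <= M.
Proof.
move=> HM; apply: sup_le_ub; first by exists `|x idx0|, idx0.
by move=> _ [i _ <-].
Qed.

Lemma lnorm_ge0 (x : linf) : 0 <= lnorm x.
Proof. exact: le_trans (normr_ge0 _) (lnorm_ge x idx0). Qed.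

Lemma lnormD (x y : linf) : lnorm (x + y) <= lnorm x + lnorm y.
Proof.
apply: lnorm_le => i; rewrite linfE_add.
by rewrite (le_trans (ler_normD _ _))// lerD// lnorm_ge.
Qed.

Lemma lnormZ (l : RR) (x : linf) : lnorm (l *: x) = `|l| * lnorm x.
Proof.
have H1 : forall (l : RR) (x : linf), lnorm (l *: x) <= `|l| * lnorm x.
  move=> l' x'; apply: lnorm_le => i; rewrite linfE_scale normrM.
  by rewrite ler_wpM2l// lnorm_ge.
apply/eqP; rewrite eq_le H1 /=.
have [->|l0] := eqVneq l 0.
  by rewrite normr0 mul0r lnorm_ge0.
have := H1 l^-1 (l *: x); rewrite scalerA mulVf// scale1r.
rewrite normrV ?unitfE// => H.
by rewrite -ler_pdivlMl ?normr_gt0// mulrC.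
Qed.

Lemma lnorm0_eq0 (x : linf) : lnorm x = 0 -> x = 0.
Proof.
move=> H; apply: linf_ext => i; rewrite linfE_zero.
by apply/normr0_eq0/eqP; rewrite eq_le normr_ge0 andbT -H lnorm_ge.
Qed.

HB.instance Definition _ := Lmodule_isNormed.Build RR linf lnormD lnormZ lnorm0_eq0.

Lemma normE (x : linf) : `|x| = lnorm x. Proof. by []. Qed.


Lemma ballE (x y : linf) e : ball x e y = (lnorm (x - y) < e).
Proof. by rewrite -ball_normE. Qed.

Lemma ballRE (x y : RR) e : ball x e y = (`|x - y| < e).
Proof. by []. Qed.

Lemma real_cauchy_cvg_gen (R : realType) (F : set_system R) : ProperFilter F -> cauchy F -> cvg F.
Proof. move=> FF; exact: cauchy_cvg. Qed.
Lemma R_cauchy_cvg (F : set_system RR) : ProperFilter F -> cauchy F -> cvg F.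
Proof. move=> FF; exact: (@real_cauchy_cvg_gen RR). Qed.

Lemma coord_le (x y : linf) i : `|x i - y i| <= lnorm (x - y).
Proof. exact: (lnorm_ge (x - y) i). Qed.

Lemma linf_complete (F : set_system linf) : ProperFilter F -> cauchy F -> cvg F.
Proof.
move=> FF /cauchyP Fc.
have ci : forall i, cvg ((fun y : linf => y i) @ F).
  move=> i; apply: R_cauchy_cvg; apply: cauchy_exP => e e0.
  have [x Fx] := Fc e e0; exists (x i).
  change (F [set y : linf | ball (x i) e (y i)]).
  apply: filterS Fx => y /=; rewrite ballE ballRE => H.
  exact: le_lt_trans (coord_le x y i) H.
pose g i := lim ((fun y : linf => y i) @ F).
have key : forall e, 0 < e -> forall x : linf, F (ball x e) -> forall i, `|x i - g i| <= e.
  move=> e e0 x Fx i.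
  apply/ler_addgt0Pr => e' e'0.
  have Hn : F [set y : linf | ball (g i) e' (y i)].
    exact: (@fcvg_ball _ _ _ (fmap_filter _ _) _ (ci i) _ e'0).
  have [h [h1 h2]] := filter_ex (filterI Fx Hn).
  move: h1 h2; rewrite ballE /= ballRE => h1 h2.
  rewrite -(subrK (h i) (x i)) -addrA.
  rewrite (le_trans (ler_normD _ _))// lerD//.
    by rewrite ltW// (le_lt_trans (coord_le x h i)).
  by rewrite distrC ltW.
have gb : bndd g.
  have [x Fx] := Fc 1 ltr01.
  exists (lnorm x + 1) => i.
  rewrite -(subrK (x i) (g i)) (le_trans (ler_normD _ _))// addrC lerD ?lnorm_ge//.
  by rewrite distrC key.
pose G := @Linf g gb.
apply: (@cvgP _ _ G); apply/fcvg_ballP => e e0.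
have e30 : 0 < e / 3 by rewrite divr_gt0.
have [x Fx] := Fc _ e30.
have Fx' := Fx.
apply: filterS Fx' => y; rewrite !ballE => Hy.
apply: (@le_lt_trans _ _ (e / 3 + e / 3)); first last.
  lra.
apply: lnorm_le => i.
rewrite linfE_add linfE_opp /=.
have h1 : `|x i - g i| <= e/3 := key _ e30 x Fx i.
have h2 : `|x i - y i| <= e/3 := ltW (le_lt_trans (coord_le x y i) Hy).
apply: le_trans (ler_distD (x i) (g i) (y i)) _.
by rewrite distrC lerD.
Qed.

HB.instance Definition _ := Uniform_isComplete.Build linf linf_complete.

Definition Ylinf : completeNormedModType RR := linf.


Definition phi (x : RR) : RR := - (x * ln x).

Lemma ln_le_sub1 (y : RR) : 0 < y -> ln y <= y - 1.
Proof.
move=> y0; have H := @le_ln1Dx RR (y - 1).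
have E : 1 + (y - 1) = y by ring.
rewrite E in H; apply: H; lra.
Qed.
Arguments ln_le_sub1 {y}.

Lemma phi0 : phi 0 = 0. Proof. by rewrite /phi mul0r oppr0. Qed.
Lemma phi1 : phi 1 = 0. Proof. by rewrite /phi ln1 mulr0 oppr0. Qed.

Lemma phi_ge0 x : 0 <= x <= 1 -> 0 <= phi x.
Proof.
case/andP => x0 x1; rewrite /phi oppr_ge0.
have [->|xp] := eqVneq x 0; first by rewrite mul0r.
have xp' : 0 < x by rewrite lt_neqAle eq_sym xp.
by rewrite mulr_ge0_le0 // ln_le0.
Qed.

Lemma phi_up (N : RR) x : 0 < N -> 0 <= x -> phi x <= x * ln N + N^-1 - x.
Proof.
move=> N0 x0.
have [->|xp] := eqVneq x 0.
  by rewrite phi0 mul0r add0r subr0 invr_ge0 ltW.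
have xp' : 0 < x by rewrite lt_neqAle eq_sym xp.
have Nx0 : 0 < (N * x)^-1 by rewrite invr_gt0 mulr_gt0.
have := ln_le_sub1 Nx0; rewrite lnV ?posrE ?mulr_gt0 // lnM ?posrE // => H.
rewrite /phi.
have -> : N^-1 = x * (N * x)^-1 by rewrite invfM mulrA mulrC mulrA mulVf ?mul1r // gt_eqF.
have : x * (- (ln N + ln x)) <= x * ((N * x)^-1 - 1) by rewrite ler_wpM2l // ltW.
lra.
Qed.

Lemma phi_low tau x : 0 < tau -> 0 <= x <= tau -> x * ln tau^-1 <= phi x.
Proof.
move=> t0 /andP[x0 xt].
have [->|xp] := eqVneq x 0; first by rewrite mul0r phi0.
have xp' : 0 < x by rewrite lt_neqAle eq_sym xp.
rewrite /phi -mulrN ler_wpM2l // -lnV ?posrE //.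
by rewrite ler_ln ?posrE ?invr_gt0 // lef_pV2 ?posrE.
Qed.

Lemma term_bound (s c r : RR) : 0 <= s <= 1 -> 0 <= c -> s * c <= r ->
  s * c - s * r <= s * c * (ln c - ln r) <= c * (1 - s).
Proof.
move=> /andP[s0 s1] c0 scr.
have [sc0|sc0] := eqVneq (s * c) 0.
  rewrite sc0 mul0r; apply/andP; split.
    have : 0 <= s * r by rewrite mulr_ge0 // (le_trans _ scr) // sc0.
    lra.
  by rewrite mulr_ge0 // subr_ge0.
have sp : 0 < s.
  rewrite lt_neqAle s0 andbT; apply/eqP => s00; move: sc0; by rewrite -s00 mul0r eqxx.
have cp : 0 < c.
  rewrite lt_neqAle c0 andbT; apply/eqP => c00; move: sc0; by rewrite -c00 mulr0 eqxx.
have scp : 0 < s * c by rewrite mulr_gt0.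
have rp : 0 < r by rewrite (lt_le_trans scp).
apply/andP; split.
  (* ln c - ln r >= 1 - r / c *)
  have H := ln_le_sub1 (divr_gt0 rp cp).
  rewrite ln_div ?posrE // in H.
  have H2 : s * c * (ln r - ln c) <= s * c * (r / c - 1) by rewrite ler_wpM2l // ltW.
  have E : s * c * (r / c - 1) = s * r - s * c.
    by rewrite mulrBr mulr1 -mulrA (mulrC c) -mulrA mulVf ?gt_eqF // mulr1.
  rewrite E in H2; lra.
have H1 : ln (s * c) <= ln r by rewrite ler_ln ?posrE.
rewrite lnM ?posrE // in H1.
have sV : 0 < s^-1 by rewrite invr_gt0.
have H3 := ln_le_sub1 sV.
rewrite lnV ?posrE // in H3.
have H4 : s * c * (ln c - ln r) <= s * c * (- ln s) by rewrite ler_wpM2l //; lra.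
have H5 : s * (- ln s) <= s * (s^-1 - 1) by rewrite ler_wpM2l.
have E : s * (s^-1 - 1) = 1 - s by rewrite mulrBr mulfV ?gt_eqF // mulr1.
rewrite E in H5.
have H6 : c * (s * - ln s) <= c * (1 - s) by rewrite ler_wpM2l.
have E2 : s * c * (- ln s) = c * (s * - ln s) by ring.
lra.
Qed.

Lemma phi_defect (t a b : RR) : 0 <= t <= 1 -> 0 <= a -> 0 <= b ->
  0 <= phi (t * a + (1 - t) * b) - t * phi a - (1 - t) * phi b <= a * (1 - t) + b * t.
Proof.
move=> /andP[t0 t1] a0 b0.
set r := t * a + (1 - t) * b.
have ta0 : 0 <= t * a by rewrite mulr_ge0.
have tb0 : 0 <= (1 - t) * b by rewrite mulr_ge0 // subr_ge0.
have ident : phi r - t * phi a - (1 - t) * phi b =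
   t * a * (ln a - ln r) + (1 - t) * b * (ln b - ln r).
  rewrite /phi /r; ring.
rewrite ident.
have /andP[A1 A2] := @term_bound t a r ltac:(lra) a0 ltac:(rewrite /r; lra).
have /andP[B1 B2] := @term_bound (1 - t) b r ltac:(lra) b0 ltac:(rewrite /r; lra).
have E : t * a - t * r + ((1 - t) * b - (1 - t) * r) = 0 by rewrite /r; ring.
apply/andP; split; first lra.
have E2 : b * (1 - (1 - t)) = b * t by ring.
lra.
Qed.


Definition LN (N : nat) : RR := ln (N%:R).
Definition active (eps : RR) (N : nat) : bool := 4 / eps <= LN N.
Definition mass n (J : nat -> bool) (p : nat -> RR) : RR := \sum_(0 <= j < n | J j) p j.
Definition ent N (J : nat -> bool) (p : nat -> RR) : RR := \sum_(0 <= j < N | ~~ J j) phi (p j).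
Definition Fv n N J p : RR := -1 + 2 * (mass n J p + ent N J p / LN N).
Definition clamp (y : RR) : RR := if y <= -1 then -1 else if 1 <= y then 1 else y.
Definition hval eps n p (i : Idx) : RR :=
  if active eps i.1 then clamp (Fv n i.1 i.2 p) else 0.

Lemma clamp_abs y : `|clamp y| <= 1.
Proof.
rewrite /clamp; case: (leP y (-1)) => H1; last case: (leP 1 y) => H2;
  rewrite ler_norml; apply/andP; split; lra.
Qed.

Lemma clamp_facts e2 a : 0 <= e2 -> -1 <= a <= 1 + e2 ->
  [/\ clamp a <= 1, clamp a <= a, a - e2 <= clamp a & (clamp a = 1 \/ clamp a = a)].
Proof.
move=> e0 /andP[a1 a2]; rewrite /clamp; case: (leP a (-1)) => H1.
  have -> : a = -1 by lra.
  split; try lra; by right.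
case: (leP 1 a) => H2; split; try lra; try by left.
all: by right.
Qed.
Arguments clamp_facts {e2 a}.

Lemma clamp_aff e2 t a b y : 0 <= e2 -> 0 <= t <= 1 ->
  -1 <= a <= 1 + e2 -> -1 <= b <= 1 + e2 -> -1 <= y <= 1 + e2 ->
  0 <= y - (t * a + (1 - t) * b) <= e2 ->
  `|t * clamp a + (1 - t) * clamp b - clamp y| <= 2 * e2.
Proof.
move=> e0 /andP[t0 t1] ha hb hy /andP[d0 d1].
have [a1 a2 a3 a4] := clamp_facts e0 ha.
have [b1 b2 b3 b4] := clamp_facts e0 hb.
have [y1 y2 y3 y4] := clamp_facts e0 hy.
have t0' : 0 <= 1 - t by lra.
have P1 : t * clamp a <= t * 1 by rewrite ler_wpM2l.
have P2 : t * clamp a <= t * a by rewrite ler_wpM2l.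
have P3 : t * (a - e2) <= t * clamp a by rewrite ler_wpM2l.
have Q1 : (1 - t) * clamp b <= (1 - t) * 1 by rewrite ler_wpM2l.
have Q2 : (1 - t) * clamp b <= (1 - t) * b by rewrite ler_wpM2l.
have Q3 : (1 - t) * (b - e2) <= (1 - t) * clamp b by rewrite ler_wpM2l.
have E1 : t * (a - e2) = t * a - t * e2 by ring.
have E2 : (1 - t) * (b - e2) = (1 - t) * b - (1 - t) * e2 by ring.
have E3 : t * e2 + (1 - t) * e2 = e2 by ring.
rewrite ler_norml; apply/andP; split.
  lra.
case: y4 => ->; lra.
Qed.

Definition dist_on n (p : nat -> RR) :=
  [/\ forall j, 0 <= p j, forall j, (n <= j)%N -> p j = 0 & \sum_(0 <= j < n) p j = 1].

Lemma sum_pad n M (P : pred nat) (p : nat -> RR) : (forall j, (n <= j)%N -> p j = 0) ->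
  (n <= M)%N -> \sum_(0 <= j < M | P j) p j = \sum_(0 <= j < n | P j) p j.
Proof.
move=> p0 nM; rewrite (big_cat_nat (leq0n n) nM) /=.
rewrite [X in _ + X]big_nat_cond [X in _ + X]big1 ?addr0 // => j /andP[/andP[nj _] _]; exact: p0.
Qed.

Lemma sum_pad0 n M (p : nat -> RR) : (forall j, (n <= j)%N -> p j = 0) ->
  (n <= M)%N -> \sum_(0 <= j < M) p j = \sum_(0 <= j < n) p j.
Proof.
move=> p0 nM; rewrite (big_cat_nat (leq0n n) nM) /=.
rewrite [X in _ + X]big_nat_cond [X in _ + X]big1 ?addr0 // => j /andP[/andP[nj _] _]; exact: p0.
Qed.

Lemma sum_ext_le N M (P : pred nat) (p : nat -> RR) : (forall j, 0 <= p j) -> (N <= M)%N ->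
  \sum_(0 <= j < N | P j) p j <= \sum_(0 <= j < M | P j) p j.
Proof.
move=> p0 NM; rewrite (big_cat_nat (leq0n N) NM) /= lerDl.
by apply: sumr_ge0 => j _.
Qed.

Lemma sum_filter_le M (P : pred nat) (p : nat -> RR) : (forall j, 0 <= p j) ->
  \sum_(0 <= j < M | P j) p j <= \sum_(0 <= j < M) p j.
Proof.
move=> p0; rewrite big_mkcond /=; apply: ler_sum => j _.
by case: (P j).
Qed.

Lemma dist_le1 n p N (P : pred nat) : dist_on n p -> \sum_(0 <= j < N | P j) p j <= 1.
Proof.
case=> p0 pz p1.
apply: (le_trans (@sum_ext_le N (maxn n N) P p p0 (leq_maxr n N))).
apply: (le_trans (@sum_filter_le _ P p p0)).
by rewrite (@sum_pad0 n (maxn n N) p pz (leq_maxl n N)) p1.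
Qed.

Lemma dist_p_le1 n p j : dist_on n p -> 0 <= p j <= 1.
Proof.
move=> d; have [p0 pz p1] := d; rewrite p0 /=.
have H : \sum_(0 <= k < j.+1) p k <= 1 := @dist_le1 n p j.+1 xpredT d.
rewrite big_nat_recr //= in H.
have : 0 <= \sum_(0 <= k < j) p k by apply: sumr_ge0.
lra.
Qed.

Lemma mass_plus n p N J : dist_on n p ->
  mass n J p + \sum_(0 <= j < N | ~~ J j) p j <= 1.
Proof.
move=> d; have [p0 pz p1] := d.
rewrite /mass -(@sum_pad n (maxn n N) J p pz (leq_maxl n N)).
apply: (@le_trans _ _ (\sum_(0 <= j < maxn n N | J j) p j +
   \sum_(0 <= j < maxn n N | ~~ J j) p j)).
  by rewrite lerD2l (@sum_ext_le N (maxn n N) _ p p0 (leq_maxr n N)).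
rewrite -(bigID J xpredT p) /=.
by rewrite (@sum_pad0 n (maxn n N) p pz (leq_maxl n N)) p1.
Qed.

Lemma LN_pos_gt1 N : 0 < LN N -> (1 < N)%N.
Proof.
move=> H; rewrite ltnNge; apply/negP => N1.
have : LN N <= 0 by rewrite /LN ln_le0 // lern1.
lra.
Qed.

Lemma ent_ge0 n p N J : dist_on n p -> 0 <= ent N J p.
Proof. by move=> d; apply: sumr_ge0 => j _; apply: phi_ge0; apply: dist_p_le1 d. Qed.

Lemma mass_ge0 n p J : dist_on n p -> 0 <= mass n J p.
Proof. by case=> p0 _ _; apply: sumr_ge0 => j _. Qed.

Lemma ent_up n p N J : dist_on n p -> (0 < N)%N ->
  ent N J p <= LN N * \sum_(0 <= j < N | ~~ J j) p j + 1.
Proof.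
move=> d N0; have [p0 pz p1] := d.
have N0' : 0 < (N%:R : RR) by rewrite ltr0n.
apply: (@le_trans _ _ (\sum_(0 <= j < N | ~~ J j) (p j * LN N + (N%:R)^-1 - p j))).
  by apply: ler_sum => j _; apply: phi_up.
apply: (@le_trans _ _ (\sum_(0 <= j < N | ~~ J j) (p j * LN N + (N%:R)^-1))).
  by apply: ler_sum => j _; rewrite lerBlDr lerDl.
rewrite big_split /= mulr_sumr lerD //.
  by apply: ler_sum => j _; rewrite mulrC.
apply: (le_trans (@sum_filter_le N (fun j => ~~ J j) (fun _ => (N%:R)^-1) _)).
  by move=> _; rewrite invr_ge0 ltW.
rewrite sumr_const_nat subn0 -[_ *+ N]mulr_natr mulVf //.
by rewrite gt_eqF.
Qed.

Lemma Fv_bounds n p N J : dist_on n p -> 0 < LN N ->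
  -1 <= Fv n N J p <= 1 + 2 / LN N.
Proof.
move=> d L0.
have N1 := @LN_pos_gt1 N L0.
have m0 := @mass_ge0 n p J d.
have e0 := @ent_ge0 n p N J d.
have eu := @ent_up n p N J d (ltnW N1).
have mp := @mass_plus n p N J d.
set S := \sum_(0 <= j < N | ~~ J j) p j in eu mp.
have H1 : 0 <= ent N J p / LN N by rewrite divr_ge0 // ltW.
have H2 : ent N J p / LN N <= S + 1 / LN N.
  rewrite ler_pdivrMr // mulrDl mulrC divfK ?gt_eqF //; lra.
rewrite /Fv; apply/andP; split; lra.
Qed.

Definition mix (t : RR) (p q : nat -> RR) : nat -> RR := fun j => t * p j + (1 - t) * q j.

Lemma dist_mix n p q t : dist_on n p -> dist_on n q -> 0 <= t <= 1 -> dist_on n (mix t p q).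
Proof.
move=> [p0 pz p1] [q0 qz q1] /andP[t0 t1]; split.
- move=> j; rewrite /mix addr_ge0 // mulr_ge0 //; lra.
- by move=> j nj; rewrite /mix pz // qz // !mulr0 addr0.
- rewrite /mix big_split /= -!mulr_sumr p1 q1; ring.
Qed.

Lemma mass_mix n J p q t : mass n J (mix t p q) = t * mass n J p + (1 - t) * mass n J q.
Proof. by rewrite /mass /mix big_split /= -!mulr_sumr. Qed.

Lemma ent_defect n N J p q t : dist_on n p -> dist_on n q -> 0 <= t <= 1 ->
  0 <= ent N J (mix t p q) - t * ent N J p - (1 - t) * ent N J q <= 1.
Proof.
move=> dp dq /andP[t0 t1].
have [p0 _ _] := dp; have [q0 _ _] := dq.
have E : ent N J (mix t p q) - t * ent N J p - (1 - t) * ent N J q =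
  \sum_(0 <= j < N | ~~ J j) (phi (mix t p q j) - t * phi (p j) - (1 - t) * phi (q j)).
  by rewrite /ent !sumrB !mulr_sumr.
rewrite E; apply/andP; split.
  apply: sumr_ge0 => j _.
  by case/andP: (@phi_defect t (p j) (q j) ltac:(lra) (p0 j) (q0 j)).
apply: (@le_trans _ _ (\sum_(0 <= j < N | ~~ J j) (p j * (1 - t) + q j * t))).
  apply: ler_sum => j _.
  by case/andP: (@phi_defect t (p j) (q j) ltac:(lra) (p0 j) (q0 j)).
rewrite big_split /= -!mulr_suml.
have Hp := @dist_le1 n p N (fun j => ~~ J j) dp.
have Hq := @dist_le1 n q N (fun j => ~~ J j) dq.
have A1 : (\sum_(0 <= j < N | ~~ J j) p j) * (1 - t) <= 1 * (1 - t) by rewrite ler_wpM2r // subr_ge0.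
have A2 : (\sum_(0 <= j < N | ~~ J j) q j) * t <= 1 * t by rewrite ler_wpM2r.
lra.
Qed.

Lemma coord_conv eps n N J p q t : 0 < eps -> dist_on n p -> dist_on n q -> 0 <= t <= 1 ->
  active eps N ->
  `|t * clamp (Fv n N J p) + (1 - t) * clamp (Fv n N J q) - clamp (Fv n N J (mix t p q))| <= eps.
Proof.
move=> e0 dp dq ht act.
have L0 : 0 < LN N by rewrite (lt_le_trans _ act) // divr_gt0.
have e2 : 0 <= 2 / LN N by rewrite divr_ge0 // ltW.
apply: (le_trans (@clamp_aff (2 / LN N) t _ _ _ e2 ht
   (@Fv_bounds n p N J dp L0) (@Fv_bounds n q N J dq L0)
   (@Fv_bounds n (mix t p q) N J (@dist_mix n p q t dp dq ht) L0) _)).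
  have D := @ent_defect n N J p q t dp dq ht.
  have E : Fv n N J (mix t p q) - (t * Fv n N J p + (1 - t) * Fv n N J q) =
    2 / LN N * (ent N J (mix t p q) - t * ent N J p - (1 - t) * ent N J q).
    rewrite /Fv mass_mix; field; by rewrite gt_eqF.
  rewrite E; apply/andP; split.
    by rewrite mulr_ge0 //; case/andP: D.
  by rewrite ler_piMr //; case/andP: D.
have : 4 / LN N <= eps.
  by rewrite ler_pdivrMr // mulrC -ler_pdivrMr.
have -> : 2 * (2 / LN N) = 4 / LN N by rewrite mulrA; congr (_ / _); lra.
by [].
Qed.


Lemma hval_bndd eps n p : bndd (hval eps n p).
Proof.
exists 1 => i; rewrite /hval; case: (active eps i.1); first exact: clamp_abs.
by rewrite normr0.
Qed.

Definition point eps n p : linf := @Linf (hval eps n p) (hval_bndd eps n p).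

Definition Aset eps : set linf := [set y | exists n p, dist_on n p /\ y = point eps n p].

Lemma dist_on_pad n M p : (n <= M)%N -> dist_on n p -> dist_on M p.
Proof.
move=> nM [p0 pz p1]; split => //.
  by move=> j Mj; apply: pz; apply: leq_trans Mj.
by rewrite (@sum_pad0 n M p pz nM).
Qed.

Lemma point_pad eps n M p : (n <= M)%N -> dist_on n p -> point eps n p = point eps M p.
Proof.
move=> nM [p0 pz p1]; apply: linf_ext => -[N J] /=.
by rewrite /hval /Fv /mass (@sum_pad n M J p pz nM).
Qed.

Lemma eval_sum k (f : 'I_k -> linf) i : (\sum_(j < k) f j) i = \sum_(j < k) f j i.
Proof.
elim/big_rec2: _ => // j y1 y2 _ <-.
by rewrite linfE_add.
Qed.

Lemma hval_abs eps n p i : `|hval eps n p i| <= 1.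
Proof.
rewrite /hval; case: (active eps i.1); first exact: clamp_abs.
by rewrite normr0.
Qed.

Lemma point_in_ball eps a : Aset eps a -> `|a| <= 1.
Proof.
move=> [n [p [_ ->]]]; rewrite normE; apply: lnorm_le => i.
exact: hval_abs.
Qed.

Lemma Aset_convex eps : 0 < eps -> eps_convex eps (Aset eps).
Proof.
move=> e0 a b [n [p [dp ->]]] [m [q [dq ->]]] t ht.
rewrite (@point_pad eps n (maxn n m) p (leq_maxl n m) dp).
rewrite (@point_pad eps m (maxn n m) q (leq_maxr n m) dq).
have dp' := @dist_on_pad n (maxn n m) p (leq_maxl n m) dp.
have dq' := @dist_on_pad m (maxn n m) q (leq_maxr n m) dq.
set M := maxn n m.
rewrite /setdist.
apply: (le_trans (@ereal_inf_lbound _ _ (`|t *: point eps M p + (1 - t) *: point eps M q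
   - point eps M (mix t p q)|%:E) _)).
  exists (point eps M (mix t p q)) => //.
  exists M, (mix t p q); split => //; exact: dist_mix.
rewrite lee_fin normE; apply: lnorm_le => -[N J].
rewrite !linfE_add linfE_opp !linfE_scale /= /hval /=.
case: ifP => act; last by rewrite !mulr0 addr0 subr0 normr0 ltW.
exact: coord_conv.
Qed.

Definition delta (i : nat) : nat -> RR := fun k => if k == i then 1 else 0.

Lemma dist_delta i : dist_on i.+1 (delta i).
Proof.
split.
- by move=> k; rewrite /delta; case: eqP.
- by move=> k ik; rewrite /delta; case: eqP => // ki; move: ik; rewrite ki ltnn.
- rewrite big_nat_recr //= /delta eqxx big_nat_cond big1 ?add0r // => k /andP[/andP[_ ki] _].
  by rewrite (ltn_eqF ki).
Qed.

Lemma hval_delta eps i N J : active eps N -> hval eps i.+1 (delta i) (N, J) = if J i then 1 else -1.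
Proof.
move=> act; rewrite /hval /= act /Fv.
have -> : mass i.+1 J (delta i) = if J i then 1 else 0.
  rewrite /mass big_mkcond big_nat_recr //= /delta eqxx big_nat_cond big1 ?add0r //.
  move=> k /andP[/andP[_ ki] _]; by rewrite (ltn_eqF ki); case: (J k).
have -> : ent N J (delta i) = 0.
  rewrite /ent big1 // => k _; rewrite /delta; case: eqP => _; [exact: phi1|exact: phi0].
rewrite mul0r addr0 /clamp.
case: (J i).
  have -> : -1 + 2 * 1 = 1 :> RR by ring.
  by rewrite ifF ?lexx //; apply/negbTE; rewrite -ltNge; lra.
have -> : -1 + 2 * 0 = -1 :> RR by ring.
by rewrite lexx.
Qed.

Lemma mass_eq n p N (J : nat -> bool) : dist_on n p -> (forall j, (N <= j)%N -> J j) ->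
  mass n J p + \sum_(0 <= j < N | ~~ J j) p j = 1.
Proof.
move=> d HJ; have [p0 pz p1] := d.
set M := maxn n N.
rewrite /mass -(@sum_pad n M J p pz (leq_maxl n N)).
have -> : \sum_(0 <= j < N | ~~ J j) p j = \sum_(0 <= j < M | ~~ J j) p j.
  rewrite (big_cat_nat (leq0n N) (leq_maxr n N)) /=.
  rewrite [X in _ + X]big_nat_cond [X in _ + X]big_pred0 ?addr0 // => j.
  by apply/negbTE; apply/negP => /andP[/andP[Nj _] nJ]; rewrite HJ in nJ.
rewrite -(bigID J xpredT p) /=.
by rewrite (@sum_pad0 n M p pz (leq_maxl n N)) p1.
Qed.

Lemma ent_low n p N (J : nat -> bool) (K : RR) : dist_on n p -> 0 < K ->
  (forall j, ~~ J j -> p j <= K^-1) ->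
  ln K * \sum_(0 <= j < N | ~~ J j) p j <= ent N J p.
Proof.
move=> d K0 HJ; have [p0 pz p1] := d.
rewrite /ent mulr_sumr; apply: ler_sum => j nJ.
have := @phi_low K^-1 (p j) ltac:(by rewrite invr_gt0) ltac:(by rewrite p0 HJ).
by rewrite invrK mulrC.
Qed.

Lemma far_point eps eta : 0 < eps -> 0 < eta ->
  exists x, convex_hull (Aset eps) x /\ ((2 - eta)%:E <= setdist x (Aset eps))%E.
Proof.
move=> e0 h0.
pose m := Num.bound (4 / eta).
have h40 : 0 < 4 / eta by rewrite divr_gt0.
have m_gt : 4 / eta < m%:R := archi_boundP (ltW h40).
have m_pos : 0 < (m%:R : RR) by apply: lt_trans m_gt.
have m1 : 1 <= (m%:R : RR) by rewrite ler1n -(ltr0n RR).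
pose b := ln (m%:R : RR).
have b0 : 0 <= b by apply: ln_ge0.
pose B := 4 * b / eta + 4 / eps.
have Bb : 0 <= 4 * b / eta by rewrite divr_ge0 // ?mulr_ge0 // ltW.
have e40 : 0 < 4 / eps by rewrite divr_gt0.
have B0 : 0 < B by rewrite /B; lra.
pose K := Num.bound (expR B).
have K_gt : expR B < K%:R := archi_boundP (ltW (expR_gt0 B)).
have K_pos : 0 < (K%:R : RR) by apply: lt_trans K_gt; exact: expR_gt0.
pose a := ln (K%:R : RR).
have aB : B <= a.
  have : ln (expR B) <= a by rewrite /a ler_ln ?posrE ?expR_gt0 // ltW.
  by rewrite expRK.
pose N := (K * m)%N.
have LNE : LN N = a + b by rewrite /LN /N natrM lnM ?posrE.
have act : active eps N by rewrite /active LNE; rewrite /B in aB; lra.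
have N0 : (0 < N)%N by rewrite muln_gt0 -!(ltr0n RR) K_pos m_pos.
have N0' : 0 < (N%:R : RR) by rewrite ltr0n.
pose x := \sum_(i < N) (N%:R)^-1 *: point eps i.+1 (delta i).
exists x; split.
  exists N, (fun _ => (N%:R)^-1), (fun i => point eps i.+1 (delta i)).
  split; [|split; [|split]].
  - by move=> i; rewrite invr_ge0 ler0n.
  - by rewrite sumr_const card_ord -[_ *+ N]mulr_natr mulVf // gt_eqF.
  - by move=> i; exists i.+1, (delta i); split => //; exact: dist_delta.
  - by [].
rewrite /setdist; apply: le_ereal_inf_tmp => _ [y [n [p [dp ->]]] <-]; rewrite lee_fin.
have [p0 pz p1] := dp.
pose J := fun j => (N <= j)%N || ((K%:R)^-1 <= p j).
have xv : x (N, J) <= -1 + 2 / m%:R.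
  have -> : x (N, J) = \sum_(i < N) (N%:R)^-1 * (if J i then 1 else -1).
    rewrite /x eval_sum; apply: eq_bigr => i _.
    by rewrite linfE_scale /= hval_delta.
  apply: (@le_trans _ _ (\sum_(i < N) ((N%:R)^-1 * (-1 + 2 * K%:R * p i)))).
    apply: ler_sum => i _; rewrite ler_wpM2l ?invr_ge0 ?ler0n //.
    rewrite /J (ltn_geF (ltn_ord i)) /=.
    case: ifP => Hi.
      have : K%:R * (K%:R)^-1 <= K%:R * p i by rewrite ler_wpM2l ?ler0n.
      rewrite mulfV ?gt_eqF //; lra.
    have : 0 <= K%:R * p i by rewrite mulr_ge0 ?ler0n.
    lra.
  rewrite (eq_bigr (fun i : 'I_N => - (N%:R)^-1 + ((N%:R)^-1 * (2 * K%:R)) * p i)); last first.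
    by move=> i _; ring.
  rewrite big_split /= sumr_const card_ord -mulr_sumr.
  have -> : (- (N%:R : RR)^-1) *+ N = -1 by rewrite mulNrn -[_ *+ N]mulr_natr mulVf // gt_eqF.
  have S1 : \sum_(i < N) p i <= 1.
    by have := @dist_le1 n p N xpredT dp; rewrite big_mkord.
  have E : (N%:R : RR)^-1 * (2 * K%:R) = 2 / m%:R.
    rewrite /N natrM; field; apply/andP; split; by rewrite gt_eqF.
  rewrite E lerD2l.
  have : 0 <= 2 / (m%:R : RR) by rewrite divr_ge0 // ltW.
  move=> H; have := ler_wpM2l H S1; lra.
have yv : -1 + 2 * (a / (a + b)) <= point eps n p (N, J).
  rewrite /= /hval /= act.
  have L0 : 0 < LN N by rewrite LNE; lra.
  have [c1 c2 c3 c4] := clamp_facts (ltac:(by rewrite divr_ge0 // ltW) : 0 <= 2 / LN N)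
     (@Fv_bounds n p N J dp L0).
  have lam1 : a / (a + b) <= 1 by rewrite ler_pdivrMr ?mul1r; lra.
  have lam0 : 0 <= a / (a + b) by rewrite divr_ge0; lra.
  have HJ : forall j, (N <= j)%N -> J j by move=> j Nj; rewrite /J Nj.
  have ME := @mass_eq n p N J dp HJ.
  have EL := @ent_low n p N J K%:R dp K_pos
    ltac:(by move=> j; rewrite /J negb_or => /andP[_]; rewrite -ltNge => /ltW).
  have m0 := @mass_ge0 n p J dp.
  set S := \sum_(0 <= j < N | ~~ J j) p j in ME EL.
  set lam := a / (a + b) in lam1 lam0 *.
  have F1 : lam * S <= ent N J p / LN N.
    rewrite LNE ler_pdivlMr; last lra.
    have -> : lam * S * (a + b) = a * S by rewrite /lam; field; lra.
    exact: EL.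
  have F2 : lam * mass n J p <= mass n J p by rewrite ler_piMl.
  have F3 : lam * mass n J p + lam * S = lam by rewrite -mulrDr ME mulr1.
  have Fv_ge : -1 + 2 * lam <= Fv n N J p by rewrite /Fv; lra.
  case: c4 => ->; lra.
have key : 2 - eta <= point eps n p (N, J) - x (N, J).
  have H1 : 2 / m%:R < eta / 2.
    rewrite ltr_pdivrMr //.
    by move: m_gt; rewrite ltr_pdivrMr // => ?; lra.
  have H2 : b / (a + b) <= eta / 4.
    rewrite ler_pdivrMr; last lra.
    have : eta * (4 * b / eta) <= eta * a by rewrite ler_wpM2l ?ltW //; rewrite /B in aB; lra.
    have -> : eta * (4 * b / eta) = 4 * b by field; rewrite gt_eqF.
    have : 0 <= eta * b by rewrite mulr_ge0 // ltW.
    lra.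
  have E : a / (a + b) = 1 - b / (a + b) by field; lra.
  rewrite E in yv; lra.
apply: (le_trans key).
rewrite normE; apply: le_trans (lnorm_ge _ (N, J)).
rewrite linfE_add linfE_opp distrC.
exact: ler_norm.
Qed.


Lemma CoA_ball eps b : convex_hull (Aset eps) b -> `|b| <= 1.
Proof.
move=> [k [w [pt [w0 [w1 [Ap ->]]]]]].
apply: le_trans (ler_norm_sum _ _ _) _.
apply: (@le_trans _ _ (\sum_(i < k) w i)); last by rewrite w1.
apply: ler_sum => i _; rewrite normrZ ger0_norm //.
by rewrite -[X in _ <= X]mulr1 ler_wpM2l // (@point_in_ball eps _ (Ap i)).
Qed.

Lemma A_in_CoA eps a : Aset eps a -> convex_hull (Aset eps) a.
Proof.
move=> Aa; exists 1%N, (fun _ => 1), (fun _ => a); split; first by move=> _; exact: ler01.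
split; first by rewrite big_ord1.
split => //.
by rewrite big_ord1 scale1r.
Qed.

Lemma a0_in eps : Aset eps (point eps 1 (delta 0)).
Proof. by exists 1%N, (delta 0); split => //; exact: dist_delta. Qed.

Theorem theorem7p10 :
  exists Y : completeNormedModType RR,
    forall eps : RR, 0 < eps ->
      exists A : set Y,
        eps_convex eps A /\ (forall a, A a -> `|a| <= 1) /\
        hausdorff A (convex_hull A) = 2%:E.
Proof.
exists Ylinf => eps e0.
exists (Aset eps); split; first exact: Aset_convex.
split; first exact: point_in_ball.
rewrite /hausdorff.
have s1 : (ereal_sup [set setdist a (convex_hull (Aset eps)) | a in Aset eps] <= 0)%E.
  apply: ge_ereal_sup => _ [a Aa <-].
  apply: (le_trans (@ereal_inf_lbound _ _ (`|a - a|%:E) _)).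
    by exists a => //; exact: A_in_CoA.
  by rewrite subrr normr0.
have s2 : ereal_sup [set setdist b (Aset eps) | b in convex_hull (Aset eps)] = 2%:E.
  apply/eqP; rewrite eq_le; apply/andP; split.
    apply: ge_ereal_sup => _ [b Cb <-].
    apply: (le_trans (@ereal_inf_lbound _ _ (`|b - point eps 1 (delta 0)|%:E) _)).
      by exists (point eps 1 (delta 0)) => //; exact: a0_in.
    rewrite lee_fin; apply: (le_trans (ler_normB _ _)).
    have := @CoA_ball eps b Cb; have := @point_in_ball eps _ (a0_in eps); lra.
  apply/lee_subgt0Pr => eta h0.
  have [x [Cx Hx]] := @far_point eps eta e0 h0.
  rewrite -EFinB; apply: (le_trans Hx).
  by apply: ereal_sup_ubound; exists x.
rewrite s2; apply: max_r.
by apply: (le_trans s1); rewrite lee_fin.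
Qed.
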